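(* For $n\ge4$, any two distinct chambers $\Delta_{\pi}\neq\Delta_{\pi'}$ of $\mathfrak S_n$ intersect (if at all) in a face of dimension at most $(n-3)(n-2)/2-1$; equivalently, for two distinct circular orderings $\pi,\pi'$ of $X$, at most $(n-3)(n-2)/2$ nontrivial splits are circular with respect to both $\pi$ and $\pi'$.
   Context: $X$ is a set of $n\ge4$ labels. A split of $X$ is an unordered partition of $X$ into two nonempty sets; it is trivial if one part is a singleton. A circular ordering of $X$ is a cyclic arrangement $\pi=(x_1,\dots,x_n)$ up to rotation and reflection; a split is circular w.r.t. $\pi$ if it has the form $\{\{x_{i+1},\dots,x_j\},X\setminus\{x_{i+1},\dots,x_j\}\}$ (indices mod $n$). Give $\mathbb R^\delta$, $\delta=2^{n-1}-n-1$, coordinates indexed by nontrivial splits. For each circular ordering $\pi$, the chamber $\Delta_\pi$ is the set of nonnegative vectors with coordinate sum $1$ supported on splits circular w.r.t. $\pi$ (a simplex of dimension $n(n-3)/2-1$), and $\mathfrak S_n=\bigcup_\pi\Delta_\pi$. *)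

(* Defs.v *)
From mathcomp Require Import all_boot all_fingroup.
Set Implicit Arguments. Unset Strict Implicit. Unset Printing Implicit Defensive.

(* Labels X = 'I_n.  A circular ordering pi = (x_0,...,x_{n-1}) is represented
   by a permutation s : {perm 'I_n} with x_t = s t. *)

Definition cyc_interval (n : nat) (i : 'I_n) (k : nat) : {set 'I_n} :=
  [set t : 'I_n | ((t + n - i) %% n < k)%N].

Definition is_arc (n : nat) (s : {perm 'I_n}) (A : {set 'I_n}) : bool :=
  [exists i : 'I_n, exists k : 'I_n.+1, A == s @: cyc_interval i k].

Definition is_split (n : nat) (P : {set {set 'I_n}}) : bool :=
  [exists A : {set 'I_n}, [&& P == [set A; ~: A], A != set0 & A != setT]].

Definition nontrivial_split (n : nat) (P : {set {set 'I_n}}) : bool :=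
  is_split P && [forall A in P, (1 < #|A|)%N].

Definition circular_split (n : nat) (s : {perm 'I_n}) (P : {set {set 'I_n}}) : bool :=
  [exists A in P, is_arc s A].

(* Two orderings define the same circular ordering iff they differ by a
   rotation or a reflection of the index cycle. *)
Definition same_circular (n : nat) (s s' : {perm 'I_n}) : Prop :=
  exists c : nat,
    (forall t u : 'I_n, val u = ((c + t) %% n)%N -> s' t = s u) \/
    (forall t u : 'I_n, val u = ((c + (n - t)) %% n)%N -> s' t = s u).

Definition common_circular_splits (n : nat) (s s' : {perm 'I_n}) : {set {set {set 'I_n}}} :=
  [set P : {set {set 'I_n}} | [&& nontrivial_split P, circular_split s P & circular_split s' P]].

(* Main.v *)
Require Import Defs.
From mathcomp Require Import all_boot all_fingroup.
From mathcomp Require Import zify.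
Set Implicit Arguments. Unset Strict Implicit. Unset Printing Implicit Defensive.

Definition good (s : seq nat) (p q : nat) : bool :=
  all (fun j => (p <= j <= q) || all (fun a => all (fun b =>
     ~~ [&& p <= a <= q, p <= b <= q & nth 0 s a < nth 0 s j < nth 0 s b])
     (iota 0 (size s))) (iota 0 (size s))) (iota 0 (size s)).

Lemma goodP s p q : reflect (forall j a b, j < size s -> a < size s -> b < size s ->
   ~~ (p <= j <= q) -> p <= a <= q -> p <= b <= q -> ~~ (nth 0 s a < nth 0 s j < nth 0 s b))
   (good s p q).
Proof.
apply: (iffP allP) => H.
- move=> j a b js az bz jn ai bi.
  have := H j; rewrite mem_iota add0n js => /(_ isT); rewrite (negbTE jn) /=.
  move/allP/(_ a); rewrite mem_iota add0n az => /(_ isT) /allP/(_ b).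
  by rewrite mem_iota add0n bz => /(_ isT); rewrite ai bi.
- move=> j; rewrite mem_iota add0n => js.
  case jn: (p <= j <= q) => //=.
  apply/allP => a; rewrite mem_iota add0n => az.
  apply/allP => b; rewrite mem_iota add0n => bz.
  case: (boolP (p <= a <= q)) => //= ai; case: (boolP (p <= b <= q)) => //= bi.
  by apply: H => //; rewrite jn.
Qed.

Definition cntall (s : seq nat) := \sum_(q < size s) \sum_(p < q) good s p q.

Lemma good_full s : good s 0 (size s).-1.
Proof. by apply/goodP => j a b js _ _; rewrite /= -ltnS prednK ?js //; case: (size s) js. Qed.

Lemma good_rcons s x p q : q < size s -> good (rcons s x) p q -> good s p q.
Proof.
move=> qs /goodP H; apply/goodP => j a b js az bz jn ai bi.
have := H j a b; rewrite size_rcons !nth_rcons js az bz; apply => //; lia.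
Qed.

Lemma sum_bool_le k (F : 'I_k -> bool) : \sum_(i < k) F i <= k.
Proof. by rewrite -[X in _ <= X]card_ord -sum1_card; apply: leq_sum => i _; case: (F i). Qed.

Lemma sum_bool_lt k (F : 'I_k -> bool) i : ~~ F i -> \sum_(j < k) F j < k.
Proof.
move=> Fi; rewrite (bigD1 i) //= (negbTE Fi) add0n.
apply: (@leq_ltn_trans (\sum_(j < k | j != i) 1)).
  by apply: leq_sum => j _; case: (F j).
rewrite sum1_card cardC1 card_ord; have := ltn_ord i; lia.
Qed.

Definition gtr : rel nat := fun a b => b < a.

Lemma suffix_mono (s : seq nat) (x : nat) : uniq (rcons s x) -> 2 <= size s ->
  good (rcons s x) 0 (size s).-1 ->
  (forall p, 0 < p < size s -> good (rcons s x) p (size s)) ->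
  sorted ltn s || sorted gtr s.
Proof.
move=> U m2 G0 Gp.
have [xs us] : x \notin s /\ uniq s by move: U; rewrite rcons_uniq => /andP[].
set f := fun i => if i < size s then nth 0 s i else if i == size s then x else 0.
have nf : forall i, nth 0 (rcons s x) i = f i.
  by move=> i; rewrite nth_rcons.
have fl : forall i, i < size s -> f i = nth 0 s i by move=> i iz; rewrite /f iz.
have fx : f (size s) = x by rewrite /f ltnn eqxx.
have xne : forall a, a < size s -> nth 0 s a != x.
  by move=> a az; apply/eqP => E; move: xs; rewrite -E mem_nth.
have sne : forall a b, a < size s -> b < size s -> a != b -> nth 0 s a != nth 0 s b.
  by move=> a b az bz ab; rewrite nth_uniq.
have G : forall p q j a b, good (rcons s x) p q -> j <= size s -> a <= size s -> b <= size s ->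
   ~~ (p <= j <= q) -> p <= a <= q -> p <= b <= q -> ~~ (f a < f j < f b).
  move=> p q j a b /goodP H jz az bz jn ai bi; rewrite -!nf; apply: H; rewrite ?size_rcons //; lia.
have H0 : forall a b, a < size s -> b < size s -> ~~ (nth 0 s a < x < nth 0 s b).
  move=> a b az bz; have := G _ _ (size s) a b G0; rewrite fx !fl //; apply; lia.
case: (boolP (has (fun a => nth 0 s a < x) (iota 0 (size s)))).
- case/hasP => a; rewrite mem_iota add0n => az ax.
  have xb : forall b, b < size s -> nth 0 s b < x.
    move=> b bz; have := H0 a b az bz; rewrite ax /= -leqNgt leq_eqVlt.
    by have := xne b bz; rewrite eq_sym => /negbTE ->.
  apply/orP; left; apply/(sortedP 0) => i iz.
  have K : ~~ (f i.+1 < f i < f (size s)).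
    by apply: (G i.+1 (size s)); try apply: Gp; lia.
  rewrite fx !fl ?xb ?andbT -?leqNgt in K; try lia.
  move: K; rewrite leq_eqVlt eq_sym (negbTE (sne _ _ _ _ _)) //; lia.
- move=> hn.
  have xb : forall b, b < size s -> x < nth 0 s b.
    move=> b bz; move/hasPn: hn => /(_ b); rewrite mem_iota add0n bz => /(_ isT).
    by rewrite -leqNgt leq_eqVlt eq_sym (negbTE (xne _ bz)).
  apply/orP; right; apply/(sortedP 0) => i iz.
  have K : ~~ (f (size s) < f i < f i.+1).
    by apply: (G i.+1 (size s)); try apply: Gp; lia.
  rewrite fx !fl ?xb /= -?leqNgt in K; try lia.
  move: K; rewrite leq_eqVlt (negbTE (sne _ _ _ _ _)) /gtr //; lia.
Qed.

Lemma cnt_rcons (s : seq nat) (x : nat) : 2 <= size s ->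
  cntall (rcons s x) + ~~ good (rcons s x) 0 (size s).-1 <=
  cntall s + \sum_(p < size s) good (rcons s x) p (size s).
Proof.
move=> m2; rewrite /cntall size_rcons big_ord_recr /= addnAC leq_add2r.
have sub : forall q p, q < size s -> good (rcons s x) p q <= good s p q.
  by move=> q p qs; case: (boolP (good _ _ _)) => // /good_rcons ->.
move: m2 (good_full s) sub; case: (size s) => [|[|k]] // _ gf sub.
rewrite big_ord_recr [leqRHS]big_ord_recr /= -addnA leq_add //.
  by apply: leq_sum => q _; apply: leq_sum => p _; apply: sub; have := ltn_ord q; lia.
rewrite !big_ord_recl /= gf addnAC.
rewrite (_ : _ + ~~ _ = 1); last by case: (good _ _ _).
rewrite leq_add2l; apply: leq_sum => p _; apply: sub; lia.
Qed.

Lemma sum_ge (q r : nat) : \sum_(p < q) (r <= p) = q - r.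
Proof. elim: q => [|q IH]; first by rewrite big_ord0. rewrite big_ord_recr /= IH; lia. Qed.

Lemma accum (k r : nat) (F : nat -> nat) :
  (forall q, q < k -> F q + (r <= q) * r <= q) -> \sum_(q < k) F q + (k - r) * r <= 'C(k,2).
Proof.
elim: k => [|k IH] H; first by rewrite big_ord0.
rewrite big_ord_recr /= binS bin1.
have IH' := IH (fun q qk => H q (ltnW qk)).
have Hk := H k (ltnSn k).
case: (leqP r k) => rk.
  have -> : (k.+1 - r) * r = (k - r) * r + r by rewrite subSn // mulSn addnC.
  move: IH' Hk; rewrite rk mul1n; move: (\sum_(i < k) F i) ((k - r) * r) => S t; lia.
have -> : k.+1 - r = 0 by lia.
have e : k - r = 0 by lia.
move: IH' Hk; have -> : (r <= k) = false by rewrite leqNgt rk.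
rewrite e /= !mul0n !addn0; move: (\sum_(i < k) F i) => S; lia.
Qed.

Lemma sum_lt (q r : nat) : \sum_(p < q) (p < r) = minn q r.
Proof. elim: q => [|q IH]; first by rewrite big_ord0 min0n. rewrite big_ord_recr /= IH; lia. Qed.

Lemma sum_q (m : nat) : \sum_(q < m) q = 'C(m, 2).
Proof. by rewrite -bin2_sum big_mkord. Qed.

Lemma inc_case (s : seq nat) (x : nat) : uniq (rcons s x) -> sorted ltn s ->
  ~~ sorted ltn (rcons s x) -> 2 <= size s ->
  cntall (rcons s x) <= 'C(size s, 2) + 1.
Proof.
move=> U So nS m2.
have [xs us] : x \notin s /\ uniq s by move: U; rewrite rcons_uniq => /andP[].
set f := fun i => if i < size s then nth 0 s i else if i == size s then x else 0.
have nf : forall i, nth 0 (rcons s x) i = f i by move=> i; rewrite nth_rcons.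
have fl : forall i, i < size s -> f i = nth 0 s i by move=> i iz; rewrite /f iz.
have fx : f (size s) = x by rewrite /f ltnn eqxx.
have xne : forall a, a < size s -> nth 0 s a != x.
  by move=> a az; apply/eqP => E; move: xs; rewrite -E mem_nth.
have sne : forall a b, a < size s -> b < size s -> a != b -> nth 0 s a != nth 0 s b.
  by move=> a b az bz ab; rewrite nth_uniq.
have slt : forall a b, a < b -> b < size s -> nth 0 s a < nth 0 s b.
  by move=> a b ab bz; apply: (sorted_ltn_nth ltn_trans 0 So); rewrite ?inE //; lia.
have sle : forall a b, a <= b -> b < size s -> nth 0 s a <= nth 0 s b.
  move=> a b; rewrite leq_eqVlt => /orP[/eqP -> //|ab bz]; exact/ltnW/slt.
have bad : forall p q j a b, j <= size s -> a <= size s -> b <= size s ->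
   ~~ (p <= j <= q) -> p <= a <= q -> p <= b <= q -> f a < f j < f b ->
   good (rcons s x) p q = false.
  move=> p q j a b jz az bz jn ai bi H; apply/negbTE/negP => /goodP G.
  by move: H; rewrite -!nf; apply/negP/G; rewrite ?size_rcons //; lia.
have ex : exists j, (j < size s) && (x < nth 0 s j).
  case: (boolP (has (fun j => x < nth 0 s j) (iota 0 (size s)))).
    by case/hasP => j; rewrite mem_iota add0n => jz xj; exists j; rewrite xj andbT.
  move/hasPn => H; suff : sorted ltn (rcons s x) by rewrite (negbTE nS).
  apply/(sortedP 0) => i.
  rewrite size_rcons ltnS !nf => iz.
  case: (ltnP i.+1 (size s)) => i1.
    by rewrite !fl; try apply: slt; lia.
  have -> : i.+1 = size s by lia.
  rewrite fx fl; last by lia.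
  have := H i; have := xne i; rewrite mem_iota add0n (_ : i < size s); last by lia.
  move=> /(_ isT) ne /(_ isT); rewrite -leqNgt leq_eqVlt (negbTE ne) //.
have [r [[rz xr] rmin]] : exists r, ((r < size s) /\ (x < nth 0 s r)) /\
    forall j, j < size s -> x < nth 0 s j -> r <= j.
  case: (ex_minnP ex) => r /andP[rz xr] H; exists r; split; first by split.
  by move=> j jz xj; apply: H; rewrite jz xj.
have below : forall p, p < r -> nth 0 s p < x.
  move=> p pr; have pz : p < size s by lia.
  case: (ltngtP (nth 0 s p) x) => // [xp|e]; first by have := rmin p pz xp; lia.
  by move: (xne p pz); rewrite e eqxx.
rewrite /cntall size_rcons big_ord_recr /=.
case: (posnP r) => [r0|rpos].
  have suf : \sum_(p < size s) good (rcons s x) p (size s) <= 1.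
    apply: (@leq_trans (\sum_(p < size s) (p < 1))); last by rewrite sum_lt; lia.
    apply: leq_sum => p _; have pz := ltn_ord p; case: (posnP p) => [->|pp]; first by case: good.
    rewrite (bad p (size s) 0 (size s) (size s).-1) //; try lia.
    rewrite fx !fl; try lia.
    rewrite r0 in xr; rewrite xr /=; apply: slt; lia.
  rewrite -sum_q leq_add //; apply: leq_sum => q _; exact: sum_bool_le.
have suf := sum_bool_le (fun p : 'I_(size s) => good (rcons s x) p (size s)).
have A := @accum (size s) r (fun q => \sum_(p < q) good (rcons s x) p q).
have T : (size s - r) * r >= size s - 1 by nia.
suff K : \sum_(q < size s) \sum_(p < q) good (rcons s x) p q + (size s - r) * r <= 'C(size s, 2).
  move: K suf T; rewrite /=.
  move: (\sum_(q < size s) \sum_(p < q) good (rcons s x) p q) => S1.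
  move: (\sum_(p < size s) good (rcons s x) p (size s)) => S2.
  move: ((size s - r) * r) => t; lia.
apply: A => q qz; case: (leqP r q) => rq.
  rewrite mul1n; have : \sum_(p < q) good (rcons s x) p q <= q - r.
    rewrite -sum_ge; apply: leq_sum => p _; have pz := ltn_ord p; case: (leqP r p) => rp; first by case: good.
    rewrite (bad p q (size s) p q) //; try lia.
    rewrite fx !fl; try lia.
    rewrite below //= (@leq_trans (nth 0 s r)) //; apply: sle; lia.
  lia.
rewrite mul0n addn0; exact: sum_bool_le.
Qed.

Lemma le_sumn (s : seq nat) v : v \in s -> v <= sumn s.
Proof. elim: s => //= a l IH; rewrite in_cons => /orP[/eqP->|/IH]; lia. Qed.

Section Sym.
Variables (s : seq nat) (M : nat).
Hypothesis sM : forall v, v \in s -> v <= M.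
Let f := fun v => M - v.

Lemma good_map p q : good (map f s) p q = good s p q.
Proof.
have bnd : forall i, i < size s -> nth 0 s i <= M by move=> i iz; apply/sM/mem_nth.
apply/goodP/goodP => H j a b; rewrite ?size_map => jz az bz jn ai bi.
- have := H j b a; rewrite size_map !(nth_map 0) // /f => /(_ jz bz az jn bi ai).
  have := bnd a az; have := bnd b bz; have := bnd j jz; lia.
- have := H j b a jz bz az jn bi ai; rewrite !(nth_map 0) // /f.
  have := bnd a az; have := bnd b bz; have := bnd j jz; lia.
Qed.

Lemma cnt_map : cntall (map f s) = cntall s.
Proof. by rewrite /cntall size_map; apply: eq_bigr => q _; apply: eq_bigr => p _; rewrite good_map. Qed.

Lemma uniq_mapM : uniq (map f s) = uniq s.
Proof. apply: map_inj_in_uniq => a b /sM aM /sM bM; rewrite /f; lia. Qed.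

Lemma sorted_mapM1 : sorted ltn (map f s) = sorted gtr s.
Proof.
rewrite sorted_map; apply: (@eq_in_sorted _ (fun v => v <= M)); last by apply/allP => v /sM.
by move=> a b aM bM; rewrite /relpre /f /gtr /=; apply/idP/idP; lia.
Qed.

Lemma sorted_mapM2 : sorted gtr (map f s) = sorted ltn s.
Proof.
rewrite sorted_map; apply: (@eq_in_sorted _ (fun v => v <= M)); last by apply/allP => v /sM.
by move=> a b aM bM; rewrite /relpre /f /gtr /=; apply/idP/idP; lia.
Qed.
End Sym.

Lemma main_comb (s : seq nat) : uniq s -> ~~ sorted ltn s -> ~~ sorted gtr s ->
  cntall s <= 'C((size s).-1, 2) + 1.
Proof.
elim/last_ind: s => [|s x IH] //= U nI nD.
rewrite size_rcons /=.
have us : uniq s by move: U; rewrite rcons_uniq => /andP[].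
case: (ltnP (size s) 2) => m2.
  move: U nI nD; case: s {IH us} m2 => [|y [|]] //= _.
  by rewrite !andbT inE /gtr => ne a b; exfalso; move: ne a b; lia.
case: (boolP (sorted ltn s)) => sI; first exact: (inc_case U sI nI m2).
case: (boolP (sorted gtr s)) => sD.
  pose M := sumn (rcons s x).
  have sM : forall v, v \in rcons s x -> v <= M by move=> v; apply: le_sumn.
  have sM' : forall v, v \in s -> v <= M by move=> v vs; apply: sM; rewrite mem_rcons in_cons vs orbT.
  have := @inc_case (map (fun v => M - v) s) (M - x).
  rewrite size_map -map_rcons (cnt_map sM) uniq_mapM // sorted_mapM1 // sorted_mapM1 //.
  by apply.
have I1 := IH us sI sD.
have I2 := cnt_rcons x m2.
have I3 := suffix_mono U m2.
have Cm : 'C(size s, 2) = 'C((size s).-1, 2) + (size s).-1.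
  by case: (size s) m2 => [|k] // _; rewrite binS bin1.
rewrite Cm.
case: (boolP [exists p : 'I_(size s), (0 < p) && ~~ good (rcons s x) p (size s)]).
  case/existsP => p /andP[p0 gp].
  have := @sum_bool_lt _ (fun p : 'I_(size s) => good (rcons s x) p (size s)) p gp.
  move: I1 I2; rewrite /=.
  move: (cntall (rcons s x)) (cntall s) (\sum_(p < size s) good (rcons s x) p (size s)) => a b c.
  move: ('C((size s).-1, 2)) => C; lia.
move=> H.
have g0 : ~~ good (rcons s x) 0 (size s).-1.
  apply/negP => g0; have : sorted ltn s || sorted gtr s; last by rewrite (negbTE sI) (negbTE sD).
  apply: (I3 g0); move=> p pz; apply/negPn/negP => gp; move/negP: H; apply; apply/existsP.
  by exists (Ordinal (proj2 (andP pz))); rewrite gp (proj1 (andP pz)).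
have := sum_bool_le (fun p : 'I_(size s) => good (rcons s x) p (size s)).
move: I1 I2; rewrite g0 /=.
move: (cntall (rcons s x)) (cntall s) (\sum_(p < size s) good (rcons s x) p (size s)) => a b c.
move: ('C((size s).-1, 2)) => C; lia.
Qed.

Lemma modn_big a n : n <= a < n + n -> a %% n = a - n.
Proof.
move=> /andP[h1 h2]; rewrite -{1}(subnK h1) modnDr modn_small //; lia.
Qed.

Ltac modsimp := repeat match goal with |- context [?a %% ?n] =>
  (rewrite (@modn_small a n); last by lia) || (rewrite (@modn_big a n); last by lia) end.

Lemma L1 n i k t : i < n -> t < n -> ~~ ((n.-1 + n - i) %% n < k) ->
  (((t + n - i) %% n < k) = (i <= t < i + k)) /\ i + k <= n.-1.
Proof.
move=> ih th; modsimp; move=> h.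
case: (leqP i t) => it; modsimp; split; apply/idP/idP; lia.
Qed.

Lemma L2 n y j K : y < n -> j < n -> K < n ->
  ((y + K) %% n + n - (j + K) %% n) %% n = (y + n - j) %% n.
Proof.
move=> yh jh Kh.
case: (ltnP (y + K) n) => h1; case: (ltnP (j + K) n) => h2; case: (ltnP y j) => h3; modsimp; lia.
Qed.

Lemma L3 n i k t : i < n -> t < n -> k <= n ->
  ~~ ((t + n - i) %% n < k) = ((t + n - (i + k) %% n) %% n < n - k).
Proof.
move=> ih th kh.
case: (ltnP (i + k) n) => h1; case: (leqP i t) => h3; modsimp;
  try (case: (ltnP t (i + k)) => h4; modsimp); try (case: (ltnP t (i + k - n)) => h5; modsimp);
  apply/idP/idP; lia.
Qed.

Lemma L4 n a b K : a < n -> b < n -> K < n -> (a + K) %% n = (b + K) %% n -> a = b.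
Proof.
move=> ah bh Kh; case: (ltnP (a + K) n) => h1; case: (ltnP (b + K) n) => h2; modsimp; lia.
Qed.

Lemma L5 n a c : a < n -> c < n -> a = (c.+1 + (a + (n.-1 - c)) %% n) %% n.
Proof.
move=> ah ch; case: (ltnP (a + (n.-1 - c)) n) => h1; modsimp;
  try (case: (ltnP (c.+1 + (a + (n.-1 - c))) n) => h2; modsimp);
  try (case: (ltnP (c.+1 + (a + (n.-1 - c) - n)) n) => h3; modsimp); lia.
Qed.

Lemma L6 n a c t : a < n -> c < n -> t < n.-1 -> (a + (n.-1 - c)) %% n = n.-1 - t.+1 ->
  a = (c + n.-1 - t) %% n.
Proof.
move=> ah ch th; case: (ltnP (a + (n.-1 - c)) n) => h1; modsimp;
  case: (ltnP (c + n.-1 - t) n) => h2; modsimp; lia.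
Qed.

Lemma ar1 a l u1 u2 : a <= u1 < a + l -> a <= u2 < a + l -> u1 != u2 -> 2 <= l.
Proof. lia. Qed.

Lemma ar2 a l t : 0 < l -> (a <= t <= a + l - 1) = (a <= t < a + l).
Proof. move=> h; apply/idP/idP; lia. Qed.

Lemma ar3 a l N : 2 <= l -> a + l <= N -> [/\ a < a + l - 1 < N, a < N.+1 & a + l - 1 < N.+1].
Proof. move=> h1 h2; split; lia. Qed.

Lemma ar4 a' l' a l j a0 b0 vj va vb : 0 < l' ->
  (a' <= j < a' + l') = (a <= vj < a + l) -> (a' <= a0 < a' + l') = (a <= va < a + l) ->
  (a' <= b0 < a' + l') = (a <= vb < a + l) -> ~~ (a' <= j <= a' + l' - 1) ->
  a' <= a0 <= a' + l' - 1 -> a' <= b0 <= a' + l' - 1 -> ~~ (va < vj < vb).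
Proof.
move=> l0 E1 E2 E3 h1 h2 h3.
have h4 : ~~ (a <= vj < a + l) by rewrite -E1 -(ar2 _ _ l0).
have h5 : a <= va < a + l by rewrite -E2 -(ar2 _ _ l0).
have h6 : a <= vb < a + l by rewrite -E3 -(ar2 _ _ l0).
lia.
Qed.

Lemma ar5 t N : t < N.+1 -> t != N -> t < N.
Proof. lia. Qed.

Lemma ar6 t N : t < N -> 0 <= t <= N.-1.
Proof. lia. Qed.

Lemma ar7 N : 3 < N.+1 -> (0 < N.-1 < N) /\ N.-1 < N.+1.
Proof. lia. Qed.

Lemma ar8 N : 'C(N.-1, 2) = ((N.+1 - 3) * (N.+1 - 2)) %/ 2.
Proof.
rewrite bin2 divn2 mulnC; congr (_ * _)./2; lia.
Qed.

Lemma ar9 a b c d C : a.+1 <= b -> b <= c -> c = d -> d <= C + 1 -> a <= C.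
Proof. lia. Qed.

Lemma card_pairs n m (g : nat -> nat -> bool) : m <= n ->
  #|[set pq : 'I_n * 'I_n | (pq.1 < pq.2 < m) && g pq.1 pq.2]| = \sum_(q < m) \sum_(p < q) g p q.
Proof.
move=> mn.
rewrite -sum1_card big_mkcond /=.
rewrite (eq_bigr (fun pq : 'I_n * 'I_n => ((pq.1 < pq.2 < m) && g pq.1 pq.2 : nat))); last first.
  by move=> pq _; rewrite inE; case: (_ && _).
rewrite -(pair_bigA _ (fun (p q : 'I_n) => ((p < q < m) && g p q : nat))) exchange_big /=.
rewrite (big_ord_widen _ (fun q => \sum_(p < q) (g p q : nat)) mn) [RHS]big_mkcond /=; apply: eq_bigr => q _.
have qn := ltn_ord q.
case: (ltnP q m) => qm.
  rewrite (big_ord_widen _ (fun p => (g p q : nat)) (ltnW qn)) [RHS]big_mkcond /=.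
  by apply: eq_bigr => p _; case: (p < q).
by rewrite big1 // => p _; rewrite andbF.
Qed.

Lemma perm_im n (s : {perm 'I_n}) (C : {set 'I_n}) x : (x \in s @: C) = ((s^-1)%g x \in C).
Proof. by rewrite -{1}(permKV s x) mem_imset //; exact: perm_inj. Qed.

Lemma cycE n (i : 'I_n) (k : nat) t : (t \in cyc_interval i k) = ((t + n - i) %% n < k).
Proof. by rewrite inE. Qed.

Lemma arcC n (s : {perm 'I_n}) A : is_arc s A -> is_arc s (~: A).
Proof.
case/existsP => i /existsP [k /eqP ->].
have n0 : 0 < n := leq_ltn_trans (leq0n i) (ltn_ord i).
apply/existsP; exists (Ordinal (ltn_pmod (i + k) n0)).
have kn : n - k < n.+1 by lia.
apply/existsP; exists (Ordinal kn); apply/eqP/setP => x.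
rewrite in_setC !perm_im !cycE /= L3 //; have := ltn_ord k; lia.
Qed.

Definition Bz n (z : 'I_n) (P : {set {set 'I_n}}) : {set 'I_n} :=
  [set x | [exists A in P, (x \in A) && (z \notin A)]].

Lemma BzE n (A : {set 'I_n}) z : z \notin A -> Bz z [set A; ~: A] = A.
Proof.
move=> zA; apply/setP => x; rewrite inE; apply/existsP/idP => [[A']|xA].
  rewrite !inE => /andP[/orP[/eqP->|/eqP->] /andP[xA zA']] //.
  by move: zA'; rewrite inE (negbTE zA).
by exists A; rewrite !inE eqxx xA zA.
Qed.

Lemma split_B n (z : 'I_n) P : is_split P -> P = [set Bz z P; ~: Bz z P] /\ z \notin Bz z P.
Proof.
case/existsP => A /and3P[/eqP -> _ _].
case: (boolP (z \in A)) => zA; last by rewrite BzE.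
have -> : [set A; ~: A] = [set ~: A; ~: ~: A] by rewrite setCK setUC.
by rewrite BzE ?inE ?zA // setCK.
Qed.

Lemma circ_B n (s : {perm 'I_n}) (z : 'I_n) P : is_split P -> circular_split s P -> is_arc s (Bz z P).
Proof.
move=> /(split_B z) [E _] /existsP [A /andP[AP aA]].
have : A \in [set Bz z P; ~: Bz z P] by rewrite -E.
rewrite !inE => /orP[/eqP <- //| /eqP EA].
by rewrite -(setCK (Bz z P)) -EA; apply: arcC.
Qed.

Lemma arc_avoid n (s : {perm 'I_n}) B (c : 'I_n) : is_arc s B -> s c \notin B ->
  exists a l, a + l <= n.-1 /\ forall y : 'I_n, (s y \in B) = (a <= (y + (n.-1 - c)) %% n < a + l).
Proof.
case/existsP => i /existsP [k /eqP ->].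
have n0 : 0 < n := leq_ltn_trans (leq0n i) (ltn_ord i).
set K := n.-1 - c.
have Kn : K < n by rewrite /K; lia.
have cK : (c + K) %% n = n.-1 by rewrite modn_small /K; have := ltn_ord c; lia.
rewrite mem_imset ?cycE; last exact: perm_inj.
move=> cn.
have cn' : ~~ ((n.-1 + n - (i + K) %% n) %% n < k) by rewrite -cK L2.
exists ((i + K) %% n), k; split.
  by case: (L1 (ltn_pmod (i + K) n0) (ltn_pmod (c + K) n0) cn').
move=> y; rewrite mem_imset ?cycE; last exact: perm_inj.
rewrite -(L2 (ltn_ord y) (ltn_ord i) Kn).
by case: (L1 (ltn_pmod (i + K) n0) (ltn_pmod (y + K) n0) cn').
Qed.

Theorem theorem9 (n : nat) (hn : (4 <= n)%N) (s s' : {perm 'I_n}) :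
  ~ same_circular s s' ->
  (#|common_circular_splits s s'| <= ((n - 3) * (n - 2)) %/ 2)%N.
Proof.
case: n hn s s' => [//|N] hn s s' nsc.
pose z : 'I_N.+1 := s' ord_max.
pose sg (t : 'I_N.+1) : 'I_N.+1 := (s^-1)%g (s' t).
pose c := sg ord_max.
pose v (t : 'I_N.+1) := (sg t + (N - c)) %% N.+1.
pose lin := mkseq (fun x => v (inord x)) N.
have hs : forall t, s (sg t) = s' t by move=> t; rewrite /sg permKV.
have sz : size lin = N by rewrite size_mkseq.
have nl : forall x, x < N -> nth 0 lin x = v (inord x) by move=> x xN; rewrite nth_mkseq.
have vinj : forall t1 t2, v t1 = v t2 -> t1 = t2.
  move=> t1 t2 /L4 E; apply: (perm_inj (s := s')); rewrite -!hs; congr (s _).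
  apply: val_inj; apply: E; rewrite ?ltn_ord //; have := ltn_ord c; lia.
have vmax : v ord_max = N by rewrite /v -/c modn_small; have := ltn_ord c; lia.
have vlt : forall t : 'I_N.+1, t != ord_max -> v t < N.
  move=> t tn; have : v t < N.+1 by rewrite ltn_pmod.
  have : v t != N by rewrite -vmax; apply/eqP => /vinj /eqP; rewrite (negbTE tn).
  lia.
have ulin : uniq lin.
  rewrite /lin /mkseq map_inj_in_uniq ?iota_uniq //.
  move=> x y; rewrite !mem_iota !add0n => xN yN /vinj E.
  by rewrite -(@inordK N x) ?E ?inordK //; lia.
have linv : forall x, x \in lin -> x < N.
  move=> x /(nthP 0) [i]; rewrite sz => iN <-; rewrite nl //; apply: vlt.
  by apply/eqP => /(congr1 val) /=; rewrite inordK; lia.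
have lini : lin =i iota 0 N.
  apply: (@uniq_min_size _ lin (iota 0 N) ulin _ _).2.
    by move=> x /linv; rewrite mem_iota.
  by rewrite size_iota sz.
have nI : ~~ sorted ltn lin.
  apply/negP => so; apply: nsc.
  have E : lin = iota 0 N by apply: (irr_sorted_eq ltn_trans ltnn) => //; exact: iota_ltn_sorted.
  exists c.+1; left => t u ue.
  rewrite -hs; congr (s _); apply: val_inj; rewrite ue /=.
  case: (eqVneq t ord_max) => [->|tn].
    rewrite -/c addSn -addnS modnDr modn_small //.
  have tN : t < N.
    have : (t : nat) != N by apply: contra tn => /eqP h; apply/eqP/val_inj.
    have := ltn_ord t; lia.
  have vt : v t = t by rewrite -[t in v t]inord_val -nl // E nth_iota.
  by rewrite {1}(@L5 N.+1 (sg t) c) // -/(v t) vt.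
have nD : ~~ sorted gtr lin.
  apply/negP => so; apply: nsc.
  have E : rev lin = iota 0 N.
    apply: (irr_sorted_eq ltn_trans ltnn); rewrite ?rev_sorted //; first exact: iota_ltn_sorted.
    by move=> x; rewrite mem_rev lini.
  exists (c + N); right => t u ue.
  rewrite -hs; congr (s _); apply: val_inj; rewrite ue /=.
  case: (eqVneq t ord_max) => [->|tn].
    rewrite /= subSnn addn1 -addnS modnDr modn_small //.
  have tN : t < N.
    have : (t : nat) != N by apply: contra tn => /eqP h; apply/eqP/val_inj.
    have := ltn_ord t; lia.
  have vt : v t = N - t.+1.
    rewrite -[t in v t]inord_val -nl // -(revK lin) E nth_rev size_iota // nth_iota //; lia.
  rewrite (_ : c + N + (N.+1 - t) = (c + N - t) + N.+1); last by lia.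
  by rewrite modnDr; apply: (@L6 N.+1) => //; rewrite -/(v t) vt.
have MC := main_comb ulin nI nD.
rewrite sz in MC.
pose Cm := common_circular_splits s s'.
pose T := fun P : {set {set 'I_N.+1}} => [set t | s' t \in Bz z P].
pose Iv := fun p q : nat => [set t : 'I_N.+1 | p <= t <= q].
pose GP := [set pq : 'I_N.+1 * 'I_N.+1 | (pq.1 < pq.2 < N) && good lin pq.1 pq.2].
pose G := (fun pq : 'I_N.+1 * 'I_N.+1 => Iv pq.1 pq.2) @: GP.
pose full := Iv 0 N.-1.
have N3 : 3 <= N by lia.
have key : forall P, P \in Cm -> T P \in G /\ T P != full.
  move=> P; rewrite inE => /and3P[/andP[Sp Nt] c1 c2].
  have [E zB] := split_B z Sp.
  have aS := circ_B z Sp c1; have aS' := circ_B z Sp c2.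
  have [a' [l' [al' H']]] := arc_avoid (c := ord_max) aS' zB.
  have H1 : forall y : 'I_N.+1, (s' y \in Bz z P) = (a' <= y < a' + l').
    by move=> y; rewrite H' /= subnn addn0 modn_small.
  have zB2 : s c \notin Bz z P by rewrite /c hs.
  have [a [l [al H]]] := arc_avoid aS zB2.
  
  have BP : Bz z P \in P by rewrite {2}E !inE eqxx.
  have CBP : ~: Bz z P \in P by rewrite {2}E !inE eqxx orbT.
  move/forall_inP: Nt => Nt.
  have [x1 [x2 [x1B x2B x12]]] := card_gt1P (Nt _ BP).
  have l2 : 2 <= l'.
    have := H1 ((s'^-1)%g x1); have := H1 ((s'^-1)%g x2); rewrite !permKV x1B x2B.
    have : ((s'^-1)%g x1 : nat) != (s'^-1)%g x2.
      by apply: contra x12 => /eqP /val_inj /perm_inj ->.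
    by move=> ne h2 h1; apply: (ar1 (esym h1) (esym h2) ne).
  have l0 : 0 < l' by apply: leq_trans l2.
  have TP : T P = Iv a' (a' + l' - 1).
    by apply/setP => t; rewrite /T /Iv in_set H1 in_set ar2.
  have [/andP[q1 q2] p1 p2] := ar3 l2 al'.
  split.
    apply/imsetP.
    exists (Ordinal p1, Ordinal p2); last by rewrite TP.
    rewrite inE /= q1 q2 /=.
    have mem : forall x, x < N -> (a' <= x < a' + l') = (a <= nth 0 lin x < a + l).
      by move=> x xN; rewrite nl // /v -H hs H1 (inordK (ltnW xN)).
    apply/goodP => j a0 b0; rewrite sz => jz az bz jn ai bi.
    exact: (ar4 l0 (mem j jz) (mem a0 az) (mem b0 bz) jn ai bi).
  move/card_gt1P: (Nt _ CBP) => [y1 [y2 [y1B y2B y12]]].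
  have [y [yB yz]] : exists y, y \in ~: Bz z P /\ y != z.
    case: (eqVneq y1 z) => [e|]; last by exists y1.
    by exists y2; split => //; rewrite -e eq_sym.
  pose t := (s'^-1)%g y.
  have tN : (t : nat) < N.
    apply: ar5 (ltn_ord t) _; apply: contra yz => /eqP h.
    by rewrite -(permKV s' y) -/t (_ : t = ord_max) //; apply: val_inj.
  apply/negP => /eqP TF.
  have : t \in full by rewrite /full /Iv in_set ar6.
  rewrite -TF /T in_set /t permKV.
  by move: yB; rewrite in_setC => /negbTE ->.
have inj : {in Cm &, injective T}.
  move=> P1 P2; rewrite !inE => /and3P[/andP[S1 _] _ _] /and3P[/andP[S2 _] _ _] TE.
  have [E1 _] := split_B z S1; have [E2 _] := split_B z S2.
  have BE : Bz z P1 = Bz z P2.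
    apply/setP => x.
    have h : ((s'^-1)%g x \in T P1) = ((s'^-1)%g x \in T P2) by rewrite TE.
    by move: h; rewrite /T in_set [in RHS]in_set !permKV.
  by rewrite E1 BE -E2.
have [/andP[o1 o2] o3] := ar7 hn.
have fG : full \in G.
  apply/imsetP; exists (Ordinal (ltn0Sn N), Ordinal o3) => //.
  rewrite inE /= o1 o2 /=; have := good_full lin; rewrite sz //.
have sub : full |: (T @: Cm) \subset G.
  apply/subsetP => X; rewrite in_setU1 => /orP[/eqP->//|/imsetP[P PC ->]].
  exact: (key P PC).1.
have nf : full \notin T @: Cm.
  apply/imsetP => [[P PC E]]; have := (key P PC).2; by rewrite -E eqxx.
have c1 := subset_leq_card sub.
rewrite cardsU1 nf card_in_imset // in c1.
have c2 : #|G| <= #|GP| := leq_imset_card _ _.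
have c3 : #|GP| = cntall lin by rewrite card_pairs // /cntall sz.
rewrite -ar8; exact: (ar9 c1 c2 c3 MC).
Qed.
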